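(* Let $G$ be a unit interval graph, i.e. the intersection graph of a finite family of closed intervals of the real line all of length one. Then $p(G)\le 2$.
   Context: A comparability graph is a graph admitting a transitive orientation. $p(G)$ is the minimum number $m$ such that $E(G)$ is the union of the edge sets of $m$ pairwise edge-disjoint comparability subgraphs of $G$. *)

(* Defs.v *)
From mathcomp Require Import all_boot.
From Stdlib Require Import Reals.
Set Implicit Arguments. Unset Strict Implicit. Unset Printing Implicit Defensive.

(* A finite simple graph G is given by a finite vertex type T and an
   adjacency relation e : rel T (edge set E(G) = unordered pairs {x,y}
   with e x y). *)

Definition unit_interval (a : R) : R -> Prop := fun z => (a <= z <= a + 1)%R.

Definition unit_interval_graph (T : finType) (e : rel T) : Prop :=
  exists a : T -> R, forall x y : T,
    e x y <-> (x <> y /\ exists z : R, unit_interval (a x) z /\ unit_interval (a y) z).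

Definition transitive_orientation (T : finType) (F : rel T) (o : rel T) : Prop :=
  (forall x y, F x y = (o x y || o y x)) /\
  (forall x y, o x y -> ~~ o y x) /\
  (forall x y z, o x y -> o y z -> o x z).

Definition comparability_graph (T : finType) (F : rel T) : Prop :=
  exists o : rel T, transitive_orientation F o.

Definition comparability_cover (T : finType) (e : rel T) (m : nat)
    (Fs : 'I_m -> rel T) : Prop :=
  (forall i x y, Fs i x y = Fs i y x) /\
  (forall i x y, Fs i x y -> e x y) /\
  (forall i j x y, i != j -> Fs i x y -> ~~ Fs j x y) /\
  (forall x y, e x y -> exists i, Fs i x y) /\
  (forall i, comparability_graph (Fs i)).

(* p(G) <= k : the minimum such m is at most k, i.e. some m <= k works. *)
Definition p_le (T : finType) (e : rel T) (k : nat) : Prop :=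
  exists m : nat, (m <= k)%N /\ exists Fs : 'I_m -> rel T, @comparability_cover T e m Fs.

(* Main.v *)
Require Import Defs.
From mathcomp Require Import all_boot.
From Stdlib Require Import Reals.
From Stdlib Require Import Lra Lia ZArith.

Lemma ui_iff (b c : R) :
  (exists z : R, unit_interval b z /\ unit_interval c z) <->
  (b <= c + 1 /\ c <= b + 1)%R.
Proof.
  unfold unit_interval; split.
  - intros [z [H1 H2]]; lra.
  - intros H. destruct (Rle_dec b c) as [Hb|Hb].
    + exists c; lra.
    + exists b; lra.
Qed.

Lemma up_close (r s : R) : (r <= s + 1)%R -> (s <= r + 1)%R ->
  (up r <= up s + 1 /\ up s <= up r + 1)%Z.
Proof.
  intros H1 H2. destruct (archimed r) as [A1 A2]. destruct (archimed s) as [B1 B2].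
  split.
  - assert (IZR (up r) < IZR (up s + 2))%R.
    { rewrite plus_IZR. lra. }
    apply lt_IZR in H. lia.
  - assert (IZR (up s) < IZR (up r + 2))%R.
    { rewrite plus_IZR. lra. }
    apply lt_IZR in H. lia.
Qed.

Lemma up_eq (r s : R) : up r = up s -> (r <= s + 1 /\ s <= r + 1)%R.
Proof.
  intros H. destruct (archimed r) as [A1 A2]. destruct (archimed s) as [B1 B2].
  rewrite H in A1 A2. lra.
Qed.

Theorem theorem5 (T : finType) (e : rel T) :
  unit_interval_graph e -> p_le e 2.
Proof.
  intros [a Ha].
  set u := fun x => up (a x).
  assert (eE : forall x y, e x y <-> x <> y /\ (a x <= a y + 1 /\ a y <= a x + 1)%R).
  { intros x y. rewrite Ha ui_iff. tauto. }
  assert (eS : forall x y, e x y = e y x).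
  { intros x y. apply/idP/idP; move/eE => [H1 H2]; apply/eE; split; try lra;
    intro E; apply H1; by rewrite E. }
  assert (eU : forall x y, e x y -> (u x <= u y + 1 /\ u y <= u x + 1)%Z).
  { intros x y H. apply eE in H. apply up_close; lra. }
  set F1 := fun x y => e x y && Z.eqb (u x) (u y).
  set F2 := fun x y => e x y && ~~ Z.eqb (u x) (u y).
  assert (F1S : forall x y, F1 x y = F1 y x).
  { intros x y. rewrite /F1 eS Z.eqb_sym. done. }
  assert (F2S : forall x y, F2 x y = F2 y x).
  { intros x y. rewrite /F2 eS Z.eqb_sym. done. }
  assert (F2par : forall x y, F2 x y -> Z.even (u x) = ~~ Z.even (u y)).
  { intros x y. rewrite /F2. move/andP => [H1 H2].
    apply eU in H1. move/negP: H2 => H2.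
    assert (u x <> u y) by (intro E; apply H2; apply Z.eqb_eq; exact E).
    assert (u y = u x + 1 \/ u y = u x - 1)%Z as [E|E] by lia; rewrite E.
    - rewrite Z.even_add. by case: (Z.even (u x)).
    - rewrite Z.even_sub. by case: (Z.even (u x)). }
  exists 2%N. split; first by [].
  exists (fun i : 'I_2 => if val i == 0%N then F1 else F2).
  split; [|split; [|split; [|split]]].
  - intros [[|[|i]] Hi] x y; try (exfalso; by move: Hi); simpl; [apply F1S | apply F2S].
  - intros [[|[|i]] Hi] x y; try (exfalso; by move: Hi); simpl; [rewrite /F1 | rewrite /F2]; by move/andP => [].
  - intros [[|[|i]] Hi] [[|[|j]] Hj] x y; try (exfalso; by move: Hi); try (exfalso; by move: Hj); simpl => // _; rewrite /F1 /F2;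
      by case: (e x y); case: (Z.eqb (u x) (u y)).
  - intros x y H. case Eq: (Z.eqb (u x) (u y)).
    + exists (@Ordinal 2 0 isT). by rewrite /= /F1 H Eq.
    + exists (@Ordinal 2 1 isT). by rewrite /= /F2 H Eq.
  - intros [[|[|i]] Hi]; try (exfalso; by move: Hi); simpl.
    + exists (fun x y => F1 x y && leq (enum_rank x).+1 (enum_rank y)).
      split; [|split].
      * intros x y. rewrite -(F1S x y). case H: (F1 x y) => //=.
        have Hne : enum_rank x != enum_rank y.
        { apply/negP => /eqP /enum_rank_inj E. subst y.
          move: H; rewrite /F1 => /andP [H _]. apply eE in H. by case: H. }
        move: Hne. rewrite neq_ltn. by move=> ->.
      * intros x y. move/andP => [_ H]. apply/negP => /andP [_ H'].
        have := ltn_trans H H'. by rewrite ltnn.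
      * intros x y z. move/andP => [H1 R1] /andP [H2 R2].
        apply/andP; split; last exact: ltn_trans R1 R2.
        move: H1 H2. rewrite /F1 => /andP [_ E1] /andP [_ E2].
        move/Z.eqb_eq: E1 => E1. move/Z.eqb_eq: E2 => E2.
        have E : u x = u z by rewrite E1.
        apply/andP; split; last by apply/Z.eqb_eq.
        apply/eE; split.
        -- intro Exz. subst z. have := ltn_trans R1 R2. by rewrite ltnn.
        -- apply up_eq. exact E.
    + exists (fun x y => F2 x y && Z.even (u x)).
      split; [|split].
      * intros x y. rewrite -(F2S x y). case H: (F2 x y) => //=.
        rewrite (F2par _ _ H). by case: (Z.even (u y)).
      * intros x y. move/andP => [H E]. rewrite (F2par _ _ H) in E.
        by move: E; case: (Z.even (u y)); rewrite ?andbF.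
      * intros x y z. move/andP => [H1 E1] /andP [H2 E2].
        rewrite (F2par _ _ H1) E2 in E1. done.
Qed.
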